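(* Let $\Gamma$ be a distance-regular antipodal double cover with diameter $D\ge 3$ and vertex set $X$. Let $x\in X$ and let $\hat{x}$ be the antipode of $x$. Then a subspace $W\subseteq V$ is an irreducible $T(x)$-module if and only if $W$ is an irreducible $T(\hat{x})$-module.
   Context: A distance-regular graph of diameter $D$ is an antipodal double cover if for every vertex $x$ there is exactly one vertex $\hat{x}$ (the antipode of $x$) with $\partial(x,\hat{x})=D$. Let $A$ be the adjacency matrix, $V=\mathbb{C}^X$, and for $x\in X$ and $0\le i\le D$ let $E^*_i(x)$ be the diagonal matrix with $(E^*_i(x))_{yy}=1$ if $\partial(x,y)=i$ and $0$ otherwise. The Terwilliger algebra $T(x)$ is the subalgebra of $\mathrm{Mat}_X(\mathbb{C})$ generated by $A,E^*_0(x),\dots,E^*_D(x)$. A $T(x)$-module is a subspace $W\subseteq V$ with $BW\subseteq W$ for all $B\in T(x)$; it is irreducible if it is nonzero and has no $T(x)$-submodules other than $0$ and $W$. *)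

(* Defs.v *)
From HB Require Import structures.
From mathcomp Require Import all_boot all_order all_algebra all_field.
Set Implicit Arguments. Unset Strict Implicit. Unset Printing Implicit Defensive.
Import GRing.Theory Num.Theory.
Local Open Scope ring_scope.

(* Graphs: vertex set 'I_n (any finite vertex set X, relabelled), edge relation e. *)
Section Graph.
Variable T : finType.
Variable e : rel T.

Definition walkb (k : nat) (x y : T) : bool :=
  [exists p : k.-tuple T, path e x p && (last x p == y)].

(* path-length distance; in a connected graph it is < #|T| so the search
   over iota 0 #|T| returns the true distance *)
Definition gdist (x y : T) : nat :=
  find (fun k => walkb k x y) (iota 0 #|T|).

Definition diameter : nat := (\max_(x : T) \max_(y : T) gdist x y)%N.

Definition distance_regular : Prop :=
  [/\ symmetric e, irreflexive e, (forall x y : T, connect e x y) &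
      exists p : nat -> nat -> nat -> nat,
        forall (x y : T) (i j : nat),
          #|[set z | (gdist x z == i) && (gdist y z == j)]| = p (gdist x y) i j].

Definition antipodal_double_cover : Prop :=
  forall x : T, #|[set y | gdist x y == diameter]| = 1%N.
End Graph.

Section Terwilliger.
Variable n : nat.
Variable e : rel 'I_n.

Definition adjmx : 'M[algC]_n := \matrix_(y, z) (e y z)%:R.

Definition dualidem (x : 'I_n) (i : nat) : 'M[algC]_n :=
  \matrix_(y, z) ((y == z) && (gdist e x y == i))%:R.

Inductive in_Talg (x : 'I_n) : 'M[algC]_n -> Prop :=
| Talg_A : in_Talg x adjmx
| Talg_E i : (i <= diameter e)%N -> in_Talg x (dualidem x i)
| Talg_1 : in_Talg x 1%:M
| Talg_add B C : in_Talg x B -> in_Talg x C -> in_Talg x (B + C)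
| Talg_scale (c : algC) B : in_Talg x B -> in_Talg x (c *: B)
| Talg_mul B C : in_Talg x B -> in_Talg x C -> in_Talg x (B *m C).

(* subspaces of V = C^X are represented by row spaces of square matrices;
   a vector v (a row) is mapped by B (acting on columns) to (B v^T)^T = v B^T *)
Definition is_Tmodule (x : 'I_n) (W : 'M[algC]_n) : Prop :=
  forall B, in_Talg x B -> (W *m B^T <= W)%MS.

Definition irreducible_Tmodule (x : 'I_n) (W : 'M[algC]_n) : Prop :=
  [/\ is_Tmodule x W, W != 0 &
      forall U : 'M[algC]_n, (U <= W)%MS -> is_Tmodule x U ->
        U = 0 \/ (U == W)%MS].
End Terwilliger.

(* Main.v *)
Require Import Defs.
From mathcomp Require Import all_boot all_order all_algebra all_field.
Set Implicit Arguments. Unset Strict Implicit. Unset Printing Implicit Defensive.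
Import GRing.Theory Num.Theory.

Section Aux.
Variable T : finType.
Variable e : rel T.
Hypothesis esym : symmetric e.

Lemma walkb_sym k x y : walkb e k x y -> walkb e k y x.
Proof.
case/existsP=> p /andP[pp /eqP lp].
apply/existsP.
have sz : size (rev (belast x p)) == k by rewrite size_rev size_belast size_tuple.
exists (Tuple sz) => /=.
have er : (fun z t => e t z) =2 e by move=> ??; rewrite esym.
rewrite -lp rev_path (eq_path er) pp /=.
case: (lastP p) => [|q a] //=.
by rewrite belast_rcons rev_cons last_rcons.
Qed.

Lemma gdist_sym x y : gdist e x y = gdist e y x.
Proof.
rewrite /gdist; apply: eq_find => k /=; apply/idP/idP; exact: walkb_sym.
Qed.
End Aux.

Section Main.
Variable n : nat.
Variable e : rel 'I_n.
Local Notation D := (diameter e).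
Variable p : nat -> nat -> nat -> nat.
Hypothesis esym : symmetric e.
Hypothesis hp : forall (x y : 'I_n) (i j : nat),
  #|[set z | (gdist e x z == i) && (gdist e y z == j)]| = p (gdist e x y) i j.
Hypothesis hanti : antipodal_double_cover e.

Lemma gdist_le a z : (gdist e a z <= D)%N.
Proof.
rewrite /diameter.
apply: leq_trans (leq_bigmax a).
exact: (leq_bigmax (F := fun y => gdist e a y) z).
Qed.

Lemma key a b z j : gdist e a b = D ->
  (gdist e b z == j) = (p (gdist e a z) D j == 1%N).
Proof.
move=> hab.
have := hanti a; move/eqP/cards1P => [c hc].
have bc : b = c by apply/set1P; rewrite -hc inE hab.
subst c.
rewrite -hp.
case: (boolP (gdist e z b == j)) => hz.
- have -> : [set w | (gdist e a w == D) && (gdist e z w == j)] = [set b].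
    apply/setP => w; rewrite !inE.
    have -> : (gdist e a w == D) = (w \in [set w | gdist e a w == D]) by rewrite inE.
    rewrite hc inE; case: eqP => [->|//]; by rewrite hz.
  by rewrite cards1 eqxx (gdist_sym esym b z).
- have -> : [set w | (gdist e a w == D) && (gdist e z w == j)] = set0.
    apply/setP => w; rewrite !inE.
    have -> : (gdist e a w == D) = (w \in [set w | gdist e a w == D]) by rewrite inE.
    rewrite hc inE; case: eqP => [->|//]; by rewrite (negbTE hz).
  by rewrite cards0 (gdist_sym esym b z) (negbTE hz).
Qed.

Lemma Talg_sum x (I : finType) (P : pred I) (F : I -> 'M[algC]_n) :
  (forall i, P i -> in_Talg e x (F i)) -> in_Talg e x (\sum_(i | P i) F i).
Proof.
move=> hF; apply: (big_ind (in_Talg e x)) => //.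
- by rewrite -(scale0r (1%:M : 'M[algC]_n)); apply: Talg_scale; apply: Talg_1.
- by move=> ???; apply: Talg_add.
Qed.

Local Open Scope ring_scope.
Lemma dual_sum a b j : gdist e a b = D ->
  dualidem e b j = \sum_(i < D.+1 | p i D j == 1%N) dualidem e a i.
Proof.
move=> hab; apply/matrixP => y z; rewrite !mxE summxE.
under eq_bigr do rewrite mxE.
case: (y == z) => /=; last by rewrite big1.
rewrite (key _ _ hab).
have hd : (gdist e a y < D.+1)%N by rewrite ltnS gdist_le.
rewrite (eq_bigr (fun i : 'I_D.+1 => if gdist e a y == i :> nat then (1 : algC) else 0)); last first.
  by move=> i _; case: eqP.
rewrite -big_mkcondr /=.
case: (boolP (p (gdist e a y) D j == 1%N)) => hP.
- rewrite (big_pred1 (Ordinal hd)) // => i /=.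
  apply/idP/eqP => [/andP[_ /eqP hi]|->]; last by rewrite /= hP eqxx.
  by apply: val_inj; rewrite /= hi.
- rewrite big_pred0 // => i /=; apply/negbTE; apply/negP => /andP[hi /eqP hi2].
  by move: hP; rewrite hi2 hi.
Qed.

Lemma incl a b B : gdist e a b = D -> in_Talg e b B -> in_Talg e a B.
Proof.
move=> hab; elim => {B}.
- exact: Talg_A.
- move=> i _; rewrite (dual_sum _ hab); apply: Talg_sum => k _; apply: Talg_E.
  by rewrite -ltnS ltn_ord.
- exact: Talg_1.
- by move=> ?? _ h1 _ h2; apply: Talg_add.
- by move=> ?? _ h1; apply: Talg_scale.
- by move=> ?? _ h1 _ h2; apply: Talg_mul.
Qed.
End Main.

Theorem lemma6p1 (n : nat) (e : rel 'I_n) (x xh : 'I_n) :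
  distance_regular e -> antipodal_double_cover e -> (3 <= diameter e)%N ->
  gdist e x xh = diameter e ->
  forall W : 'M[algC]_n,
    irreducible_Tmodule e x W <-> irreducible_Tmodule e xh W.
Proof.
move=> [esym _ _ [p hp]] hanti _ hx W.
have hxh : gdist e xh x = diameter e by rewrite (gdist_sym esym).
have eqM : forall U, is_Tmodule e x U <-> is_Tmodule e xh U.
  move=> U; split => hU B hB; apply: hU.
  - exact: (incl esym hp hanti hx hB).
  - exact: (incl esym hp hanti hxh hB).
split=> [[h1 h2 h3]|[h1 h2 h3]]; split => //.
- by apply/eqM.
- by move=> U hUW /eqM; apply: h3.
- by apply/eqM.
- by move=> U hUW /eqM; apply: h3.
Qed.
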